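(* For every integer $N\ge 3$, the graph $G_N=K_2\cup (N-2)K_1$ satisfies $|V(G_N)|=N$, $\Delta(G_N)=1<N-1$, and $\hat r_\infty(G_N)=1$. Consequently, there is an infinite family of graphs $G_N$ with $|V(G_N)|=N$, $\Delta(G_N)<N-1$ and $\hat r_\infty(G_N)=1$ for every $N$; and for every fixed $c>1$ there is a family of graphs $G_N$ with $|V(G_N)|=N$ and $\Delta(G_N)<c$ such that $\hat r_\infty(G_N)$ does not tend to $0$ as $N\to\infty$.
   Context: All graphs are finite and simple; a graph is nonempty if it has at least one edge. $G\cup H$ is disjoint union, $sK_1$ is the edgeless graph on $s$ vertices, $tK_2$ is a matching with $t$ edges, $\Delta$ is maximum degree. For graphs $F,G,H$, $F\to(G,H)$ means every red--blue coloring of $E(F)$ contains a red copy of $G$ or a blue copy of $H$, and $\hat r(G,H)=\min\{|E(F)|:F\to(G,H)\}$. For a nonempty graph $G$, $\hat r_\infty(G)=\lim_{t\to\infty}\frac{\hat r(tK_2,G)}{t\,|E(G)|}$ (this limit exists). *)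

(* Defs.v *)
From Stdlib Require Import Reals ClassicalEpsilon.
From mathcomp Require Import all_boot.


(* The raw relation [radj] is
   arbitrary; the actual adjacency [adj] is its symmetric, loopless part, so
   every record denotes a simple graph and every simple graph arises. *)
Record graph := Graph { nv : nat; radj : rel 'I_nv }.

Definition adj (G : graph) : rel 'I_(nv G) :=
  fun x y => (x != y) && (radj G x y || radj G y x).

Definition edges (G : graph) : {set {set 'I_(nv G)}} :=
  [set [set x; y] | x in 'I_(nv G), y in 'I_(nv G) & adj G x y].

Definition nedges (G : graph) : nat := #|edges G|.

Definition deg (G : graph) (v : 'I_(nv G)) : nat := #|[set u | adj G v u]|.

(* maximum degree Delta(G) (0 for the graph with no vertices) *)
Definition maxdeg (G : graph) : nat := \max_(v : 'I_(nv G)) deg G v.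

Definition mono_copy (F G : graph) (c : {set 'I_(nv F)} -> bool) (b : bool)
  (f : 'I_(nv G) -> 'I_(nv F)) : Prop :=
  injective f /\
  forall x y, adj G x y -> adj F (f x) (f y) /\ c [set f x; f y] = b.

(* F -> (G, H): every red-blue colouring (red = true, blue = false) of E(F)
   has a red copy of G or a blue copy of H. *)
Definition arrows (F G H : graph) : Prop :=
  forall c : {set 'I_(nv F)} -> bool,
    (exists f, mono_copy F G c true f) \/
    (exists f, mono_copy F H c false f).

Definition sr_attained (G H : graph) (m : nat) : Prop :=
  exists F : graph, arrows F G H /\ nedges F = m.

Definition is_size_ramsey (G H : graph) (m : nat) : Prop :=
  sr_attained G H m /\ forall k, sr_attained G H k -> m <= k.

(* hat r(G,H) = min { |E(F)| : F -> (G,H) }  (the minimum exists by Ramsey's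
   theorem; the default 0 is never used). *)
Definition hat_r (G H : graph) : nat :=
  match excluded_middle_informative (exists m, is_size_ramsey G H m) with
  | left h => proj1_sig (constructive_indefinite_description _ h)
  | right _ => 0
  end.

(* t K_2 : vertices 0..2t-1, edges {2i, 2i+1} *)
Definition matching (t : nat) : graph :=
  Graph (2 * t) (fun x y => (val x %/ 2 == val y %/ 2)).

(* K_2 u (N-2) K_1 : vertices 0..N-1, single edge {0,1} *)
Definition GN (N : nat) : graph :=
  Graph N (fun x y => (val x == 0) && (val y == 1)).

Definition rinf_seq (G : graph) (t : nat) : R :=
  Rdiv (INR (hat_r (matching t) G)) (INR (t * nedges G)).

Definition rinf_is (G : graph) (l : R) : Prop := Un_cv (rinf_seq G) l.

(* Main.v *)
Require Import Defs.
From Stdlib Require Import Reals Lra Lia ClassicalEpsilon.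
From mathcomp Require Import all_boot zify.

Lemma ev_lt t (i : 'I_t) : 2 * i < 2 * t. Proof. have := ltn_ord i; lia. Qed.
Lemma od_lt t (i : 'I_t) : 2 * i + 1 < 2 * t. Proof. have := ltn_ord i; lia. Qed.
Arguments ev_lt {t}. Arguments od_lt {t}.
Lemma pair_lemma (a b c : nat) : b != c -> b %/2 == c %/2 ->
  ((a == b) || (a == c)) = ((a == 2*(b%/2)) || (a == 2*(b%/2)+1)).
Proof.
move=> h1 h2; apply/idP/idP => /orP [] /eqP ->; apply/orP; lia.
Qed.

Definition FF t N : graph :=
  Graph (2 * t + N) (fun x y => (x < 2 * t) && (y < 2 * t) && (x %/ 2 == y %/ 2)).

Lemma adj_FF t N (x y : 'I_(nv (FF t N))) :
  adj (FF t N) x y = (x != y) && [&& (x:nat) < 2 * t, (y:nat) < 2 * t & (x:nat) %/ 2 == (y:nat) %/ 2].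
Proof.
rewrite /adj /=; case: (x != y) => //=.
by rewrite [(y < _) && _]andbC [_ %/ 2 == y %/ 2]eq_sym orbb andbA.
Qed.

Lemma ev_lt' t N (i : 'I_t) : 2 * i < nv (FF t N). Proof. have := ltn_ord i; rewrite /=; lia. Qed.
Lemma od_lt' t N (i : 'I_t) : 2 * i + 1 < nv (FF t N). Proof. have := ltn_ord i; rewrite /=; lia. Qed.
Arguments ev_lt' {t N}. Arguments od_lt' {t N}.

Lemma nedges_FF t N : nedges (FF t N) = t.
Proof.
pose e (i : 'I_t) : {set 'I_(nv (FF t N))} :=
    [set Ordinal (ev_lt' i); Ordinal (od_lt' i)].
have einj : injective e.
  move=> i j /setP /(_ (Ordinal (ev_lt' i))).
  rewrite !inE eqxx /= => /esym /orP [] /eqP /(congr1 val) /= h;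
    apply: val_inj; move: h => /=; lia.
rewrite /nedges; suff -> : edges (FF t N) = [set e i | i in 'I_t] by rewrite card_imset // card_ord.
apply/setP => s; apply/imset2P/imsetP.
- move=> [x y _]; rewrite inE => /andP [_]; rewrite adj_FF => /and4P [hxy hx hy hd] ->.
  have hi : (x:nat) %/ 2 < t by lia.
  exists (Ordinal hi) => //.
  rewrite /e; apply/setP => z; rewrite !inE -!val_eqE /=.
  move: hxy; rewrite -val_eqE /= => hxy.
  exact: pair_lemma.
- move=> [i _ ->].
  exists (Ordinal (ev_lt' i)) (Ordinal (od_lt' i)) => //.
  rewrite inE adj_FF -val_eqE /=; have := ltn_ord i; lia.
Qed.
Lemma adj_GN N (x y : 'I_(nv (GN N))) :
  adj (GN N) x y = (((x:nat) == 0) && ((y:nat) == 1)) || (((x:nat) == 1) && ((y:nat) == 0)).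
Proof.
rewrite /adj /=; case: x y => [x hx] [y hy]; rewrite -val_eqE /=.
case: x hx => [|[|x]] hx; case: y hy => [|[|y]] hy.
all: by rewrite /= ?andbF ?andbT ?orbF.
Qed.

Lemma arrows_FF t N : arrows (FF t N) (matching t) (GN N).
Proof.
move=> c.
case: (boolP [exists x, exists y, adj (FF t N) x y && ~~ c [set x; y]]).
- move=> /existsP [x /existsP [y /andP [hxy hc]]]; right.
  move: (hxy); rewrite adj_FF => /and4P [hne0 hx hy hd].
  have hne : (x:nat) != (y:nat) := hne0.
  pose g (k : 'I_(nv (GN N))) : 'I_(nv (FF t N)) :=
    if (k:nat) == 0 then x else if (k:nat) == 1 then y else rshift (2 * t) k.
  exists g; split.
  + have key : forall k, nat_of_ord (g k) =
      (if (k:nat) == 0 then (x:nat) else if (k:nat) == 1 then (y:nat) else 2 * t + k).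
      by move=> k; rewrite /g; case: ifP => //; case: ifP.
    move=> a b /(congr1 (@nat_of_ord _)); rewrite !key => h; apply: ord_inj.
    move: h; case: eqP => ha; case: eqP => hb; try case: eqP => ha'; try case: eqP => hb'; lia.
  + move=> a b; rewrite adj_GN => /orP [] /andP [/eqP ha /eqP hb]; rewrite /g ha hb /=.
    * by split => //; apply/negbTE.
    * split; first by rewrite adj_FF; apply/and4P; split => //; rewrite eq_sym.
      by move: hc; rewrite setUC /= => /negbTE.
- rewrite negb_exists => /forallP H; left.
  exists (fun i => lshift N i); split.
  + by move=> a b /(congr1 val) /= h; apply: val_inj.
  + move=> a b hab.
    have hab' : adj (FF t N) (lshift N a) (lshift N b).
      rewrite adj_FF -val_eqE /=; move: hab; rewrite /adj /= -val_eqE /=.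
      move: (ltn_ord a) (ltn_ord b) => /= ha hb.
      move=> /andP [-> /orP [] /eqP ->]; rewrite ha hb //= eqxx.
    split => //.
    move: (H (lshift N a)); rewrite negb_exists => /forallP /(_ (lshift N b)).
    by rewrite hab' andTb negbK => ->.
Qed.
Lemma lb t N F : 2 <= N -> arrows F (matching t) (GN N) -> t <= nedges F.
Proof.
move=> hN /(_ (fun _ => true)) [[f [finj fadj]] | [f [_ fadj]]].
- pose e (i : 'I_t) : {set 'I_(nv F)} :=
    [set f (Ordinal (ev_lt i)); f (Ordinal (od_lt i))].
  have einj : injective e.
    move=> i j /setP /(_ (f (Ordinal (ev_lt i)))).
    rewrite !inE eqxx /= => /esym /orP [] /eqP /finj /(congr1 val) /= h;
      apply: val_inj; move: h => /=; lia.
  rewrite /nedges -{1}(card_ord t) -(card_imset _ einj).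
  apply: subset_leq_card; apply/subsetP => s /imsetP [i _ ->].
  apply/imset2P; exists (f (Ordinal (ev_lt i))) (f (Ordinal (od_lt i))) => //.
  rewrite inE; apply: (proj1 (fadj _ _ _)).
  rewrite /adj /= -val_eqE /=; apply/andP; split; first lia.
  apply/orP; left; apply/eqP.
  lia.
- have h0 : 0 < N by lia.
  have h1 : 1 < N by lia.
  have := proj2 (fadj (Ordinal h0) (Ordinal h1) _).
  by rewrite adj_GN /= => /(_ isT).
Qed.

Lemma hat_r_GN t N : 2 <= N -> hat_r (matching t) (GN N) = t.
Proof.
move=> hN.
have H : is_size_ramsey (matching t) (GN N) t.
  split; first by exists (FF t N); split; [apply: arrows_FF | apply: nedges_FF].
  by move=> k [F [hF <-]]; apply: lb hN hF.
rewrite /hat_r; case: excluded_middle_informative => [h|[]]; last by exists t.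
case: (constructive_indefinite_description _ h) => m [hm1 hm2] /=.
by apply/eqP; rewrite eqn_leq (hm2 t H.1) (H.2 m hm1).
Qed.

Lemma nedges_GN N : 2 <= N -> nedges (GN N) = 1.
Proof.
move=> hN.
have h0 : 0 < nv (GN N) by rewrite /=; lia.
have h1 : 1 < nv (GN N) by rewrite /=; lia.
rewrite /nedges; suff -> : edges (GN N) = [set [set Ordinal h0; Ordinal h1]] by rewrite cards1.
apply/setP => s; rewrite inE; apply/imset2P/eqP.
- move=> [x y _]; rewrite inE => /andP [_]; rewrite adj_GN => /orP [] /andP [/eqP hx /eqP hy] ->.
  + by congr [set _; _]; apply: ord_inj.
  + by rewrite setUC; congr [set _; _]; apply: ord_inj.
- move=> ->; exists (Ordinal h0) (Ordinal h1) => //.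
  by rewrite inE adj_GN.
Qed.

Lemma maxdeg_GN N : 2 <= N -> maxdeg (GN N) = 1.
Proof.
move=> hN.
have h0 : 0 < nv (GN N) by rewrite /=; lia.
have h1 : 1 < nv (GN N) by rewrite /=; lia.
apply/eqP; rewrite eqn_leq; apply/andP; split.
- apply/bigmax_leqP => v _; rewrite /deg.
  apply/card_le1_eqP => u1 u2; rewrite !inE !adj_GN => hu1 hu2.
  apply: ord_inj; lia.
- apply: (leq_trans _ (leq_bigmax (Ordinal h0))).
  by apply/card_gt0P; exists (Ordinal h1); rewrite inE adj_GN.
Qed.

Lemma rinf_GN N : 2 <= N -> rinf_is (GN N) R1.
Proof.
move=> hN eps heps; exists 1%nat => n hn.
rewrite /rinf_seq hat_r_GN // nedges_GN // muln1 /Rdiv Rinv_r ?R_dist_eq //.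
apply: not_0_INR; lia.
Qed.

Lemma not_cv_one : ~ Un_cv (fun _ : nat => R1) R0.
Proof.
move=> H; case: (H (Rinv 2) ltac:(lra)) => M HM.
have := HM M (le_n M); rewrite /R_dist Rminus_0_r Rabs_R1; lra.
Qed.

Theorem corollary2p7 :
  (forall N : nat, 3 <= N ->
     nv (GN N) = N /\ maxdeg (GN N) = 1 /\ 1 < N - 1 /\ 0 < nedges (GN N) /\
     rinf_is (GN N) R1)
  /\
  (exists Gf : nat -> graph, forall N : nat, 3 <= N ->
     nv (Gf N) = N /\ maxdeg (Gf N) < N - 1 /\ 0 < nedges (Gf N) /\
     rinf_is (Gf N) R1)
  /\
  (forall c : R, Rlt R1 c ->
     exists (Gf : nat -> graph) (rf : nat -> R),
       (forall N : nat, 3 <= N ->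
          nv (Gf N) = N /\ Rlt (INR (maxdeg (Gf N))) c /\
          0 < nedges (Gf N) /\ rinf_is (Gf N) (rf N)) /\
       ~ Un_cv rf R0).
Proof.
split; [|split].
- move=> N hN; have hN2 : 2 <= N by lia.
  rewrite maxdeg_GN // nedges_GN //; repeat split; try done; try lia; exact: rinf_GN.
- exists GN => N hN; have hN2 : 2 <= N by lia.
  rewrite maxdeg_GN // nedges_GN //; repeat split; try done; try lia; exact: rinf_GN.
- move=> c hc; exists GN, (fun _ => R1); split; last exact: not_cv_one.
  move=> N hN; have hN2 : 2 <= N by lia.
  rewrite maxdeg_GN // nedges_GN //; repeat split; try done; try exact: rinf_GN.
Qed.
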